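(* Let $K,L,N$ be positive integers and $t$, $n\ge 2$ integers with $K=nt+(n-1)L$ and $L\ge t$, and consider a $(K,L,M,N)$ multi-antenna coded caching system with $\frac{M}{N}=\frac{t}{K}$. Then the delivery time $$T^*=\frac{K-t}{t+L}=n-1$$ is achievable by a scheme with subpacketization number $\frac{K}{\gcd(K,t,L)}$.
   Context: $(K,L,M,N)$ multi-antenna coded caching system: a server holds $N$ files $W_1,\dots,W_N$, each of size one unit, and has $L$ transmit antennas; it serves $K$ single-antenna users over a MISO broadcast channel of capacity one file per unit time. User $k$ has a cache of size $M$ units ($0\le M\le N$). In the placement phase (before demands are known) the server fills caches with uncoded file content. In the delivery phase each user $k$ requests a file $W_{d_k}$; the server sends vectors $\mathbf{x}(\tau)\in\mathbb{C}^L$ and user $k$ receives $y_k(\tau)=\mathbf{h}_k^T\mathbf{x}(\tau)+w_k(\tau)$ with $\mathbf{h}_k\in\mathbb{C}^L$ its channel vector; all nodes have perfect channel knowledge, the channel vectors are generic, and the high-SNR regime is considered (noise neglected). A scheme is correct if every user recovers its requested file from its cache and received signals, for every demand vector. The subpacketization number is the number of equal-size subfiles into which each file is split; if each file is split into $F$ subfiles and the delivery consists of $S'$ transmissions each of size $1/F$ file, the delivery time is $T=S'/F$. ''Achievable'' means such a correct scheme exists for every demand vector with that delivery time. *)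

(* Defs.v *)
From HB Require Import structures.
From mathcomp Require Import all_boot all_order all_algebra.
From mathcomp Require Import complex Rstruct.
From mathcomp Require Import mpoly.
From Stdlib Require Import Reals.

Set Implicit Arguments.
Unset Strict Implicit.
Unset Printing Implicit Defensive.

Import Order.TTheory GRing.Theory Num.Theory.
Local Open Scope ring_scope.

Definition C : numClosedFieldType := (Rdefinitions.R)[i].

(* A subfile is indexed by (file index n, subfile index j) : 'I_N * 'I_F.
   A library realization assigns a complex symbol to every subfile
   (high-SNR / DoF abstraction: each subfile of size 1/F is one symbol,
   one transmission of size 1/F carries one symbol per antenna). *)
Definition library (N F : nat) := 'I_N * 'I_F -> C.

Definition transmit (N F S L : nat) (V : 'I_S -> 'I_N * 'I_F -> 'cV[C]_L)
  (W : library N F) (tau : 'I_S) : 'cV[C]_L :=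
  \sum_(p : 'I_N * 'I_F) W p *: V tau p.

(* Received signal of user k: y_k(tau) = h_k^T x(tau), where h_k^T is row k
   of the channel matrix H (noise neglected). *)
Definition received (K L N F S : nat) (H : 'M[C]_(K, L))
  (V : 'I_S -> 'I_N * 'I_F -> 'cV[C]_L) (W : library N F)
  (k : 'I_K) (tau : 'I_S) : C :=
  (row k H *m transmit V W tau) 0 0.

(* User k can recover its requested file W_{d_k} from its cache content
   (the values of the cached subfiles) and its received signals: the
   requested file is a function of these observations. *)
Definition decodable (K L N F S : nat) (H : 'M[C]_(K, L))
  (Z : 'I_K -> {set 'I_N * 'I_F}) (d : 'I_K -> 'I_N)
  (V : 'I_S -> 'I_N * 'I_F -> 'cV[C]_L) (k : 'I_K) : Prop :=
  forall W W' : library N F,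
    (forall p, p \in Z k -> W p = W' p) ->
    (forall tau, received H V W k tau = received H V W' k tau) ->
    forall j : 'I_F, W (d k, j) = W' (d k, j).

Definition chan_coords (K L : nat) (H : 'M[C]_(K, L)) : 'I_(K * L) -> C :=
  fun i => mxvec H 0 i.

(* A correct scheme with subpacketization F and S transmissions (each of
   size 1/F) exists: an uncoded placement Z (user k caches the subfiles in
   Z k, at most M*F of them, i.e. at most M units), fixed before demands and
   channels are known, such that for generic channels (all H outside the zero
   set of a nonzero polynomial in the channel coefficients) and for every
   demand vector d there is a delivery letting every user decode. *)
Definition scheme_exists (K L N : nat) (M : rat) (F S : nat) : Prop :=
  exists Z : 'I_K -> {set 'I_N * 'I_F},
    (forall k, (#|Z k|)%:R <= M * F%:R) /\
    exists P : {mpoly C[K * L]},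
      P != 0 /\
      forall H : 'M[C]_(K, L),
        (P.@[chan_coords H] != 0) ->
        forall d : 'I_K -> 'I_N,
          exists V : 'I_S -> 'I_N * 'I_F -> 'cV[C]_L,
            forall k, decodable H Z d V k.

Definition achievable (K L N : nat) (M : rat) (F : nat) (T : rat) : Prop :=
  exists S : nat, S%:R / F%:R = T /\ scheme_exists K L N M F S.

(* Main.v *)
Require Import Defs.
From HB Require Import structures.
From mathcomp Require Import all_boot all_order all_algebra.
From mathcomp Require Import complex Rstruct.
From mathcomp Require Import mpoly.
From mathcomp Require Import zify ring lra.
Set Implicit Arguments.
Unset Strict Implicit.
Unset Printing Implicit Defensive.
Import Order.TTheory GRing.Theory Num.Theory.
Definition rho (Kp j u : nat) : nat := (u + (Kp - j)) %% Kp.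

Lemma rho_lt Kp j u : 0 < Kp -> rho Kp j u < Kp.
Proof. by move=> h; rewrite /rho ltn_pmod. Qed.

Lemma rho_spec Kp j u : j < Kp -> rho Kp j u + j = u %[mod Kp].
Proof.
move=> hj; rewrite /rho modnDml -addnA subnK ?(ltnW hj) //.
by rewrite modnDr.
Qed.

Lemma rho_char Kp j u r : j < Kp -> r < Kp -> r + j = u %[mod Kp] -> rho Kp j u = r.
Proof.
move=> hj hr e; rewrite /rho -modnDml -e modnDml -addnA subnKC ?(ltnW hj) //.
by rewrite modnDr modn_small.
Qed.

Lemma mod_of_eq a b c d : a = b + c * d -> a = b %[mod d].
Proof. by move=> ->; rewrite addnC modnMDl. Qed.

Lemma card_inj_bound (T : finType) (A : {set T}) (f : T -> nat) m :
  {in A &, injective f} -> (forall x, x \in A -> f x < m) -> #|A| <= m.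
Proof.
move=> finj fb.
have u : uniq (map f (enum A)).
  by rewrite map_inj_in_uniq ?enum_uniq // => x y; rewrite !mem_enum; apply: finj.
have := uniq_leq_size u (s2 := iota 0 m).
rewrite size_map size_iota -cardE; apply => y /mapP [x]; rewrite mem_enum => xA ->.
by rewrite mem_iota /= add0n fb.
Qed.

Lemma pair_inj a b q q' m : a < m -> b < m -> a + m * q = b + m * q' -> a = b /\ q = q'.
Proof.
move=> am bm e.
have ab : a = b.
  have := congr1 (modn^~ m) e.
  by rewrite addnC mulnC modnMDl addnC mulnC modnMDl !modn_small.
split => //; move: e; rewrite ab => /addnI /eqP.
by rewrite eqn_mul2l; case/orP => [/eqP m0|/eqP //]; move: am; rewrite m0.
Qed.

Lemma count_users g Kp Lp K (j lo c : nat) (A : {set 'I_K}) :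
  K = g * Kp -> 0 < Kp -> j < Kp -> lo <= Lp ->
  (forall x, x \in A -> (rho Kp j x < lo) || (c + lo <= rho Kp j x < c + Lp)) ->
  #|A| <= Lp * g.
Proof.
move=> eK Kp0 jK loL hA.
pose phi (r : nat) := if r < lo then r else r - c.
have phib : forall x, x \in A -> phi (rho Kp j x) < Lp.
  move=> x /hA; rewrite /phi; case: ifP => //; lia.
apply: (card_inj_bound (f := fun x : 'I_K => phi (rho Kp j x) + Lp * (x %/ Kp))).
  move=> x y xA yA /= e.
  have [e1 e2] := pair_inj (phib x xA) (phib y yA) e.
  have er : rho Kp j x = rho Kp j y.
    move: (hA x xA) (hA y yA) e1; rewrite /phi.
    case: ifP; case: ifP; lia.
  apply: val_inj => /=.
  rewrite (divn_eq x Kp) (divn_eq y Kp) e2; congr (_ + _).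
  have := rho_spec x jK; have := rho_spec y jK; rewrite er => <- <-.
  by [].
move=> x xA.
have xg : x %/ Kp < g by rewrite ltn_divLR // -eK ltn_ord.
have := phib x xA; nia.
Qed.
Definition cacheD Kp tp K (u : 'I_K) (j : 'I_Kp) : bool := rho Kp j u < tp.
Definition svD Kp tp Lp K S (tau : 'I_S) (u : 'I_K) : bool :=
  let j := tau %% Kp in let c := tp + tau %/ Kp * (tp + Lp) in
  (rho Kp j u < tp) || (c <= rho Kp j u < c + Lp).
Definition aD Kp tp Lp (Kp0 : 0 < Kp) K S (tau : 'I_S) (u : 'I_K) : 'I_Kp :=
  let j := tau %% Kp in let c := tp + tau %/ Kp * (tp + Lp) in
  Ordinal (ltn_pmod (if rho Kp j u < tp then j + c else j) Kp0).

Lemma cache_card Kp tp K N (u : 'I_K) :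
  #|[set p : 'I_N * 'I_Kp | cacheD tp u p.2]| <= N * tp.
Proof.
apply: (card_inj_bound (f := fun p : 'I_N * 'I_Kp => p.1 + N * rho Kp p.2 u)).
  move=> [p1 p2] [q1 q2]; rewrite !inE /cacheD /= => _ _ e.
  have [e1 e2] := pair_inj (ltn_ord p1) (ltn_ord q1) e.
  have h2 : p2 = q2.
    apply: val_inj => /=.
    have := rho_spec u (ltn_ord p2); have := rho_spec u (ltn_ord q2).
    rewrite e2 => <- /eqP; rewrite eqn_modDl !modn_small //=; by move/eqP.
  by rewrite h2 (val_inj e1).
move=> [p1 p2]; rewrite inE /cacheD /= => h.
have := ltn_ord p1; nia.
Qed.


Lemma not_cached_served Kp tp Lp m (Kp0 : 0 < Kp) K S (tau : 'I_S) (w : 'I_K) :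
  Kp = tp + m.+1 * (tp + Lp) -> S = m.+1 * Kp -> tp <= Lp ->
  svD Kp tp Lp tau w -> ~~ cacheD tp w (aD tp Lp Kp0 tau w).
Proof.
move=> eKp eS tL; rewrite /svD /cacheD /aD /=.
set j := tau %% Kp; set k := tau %/ Kp.
have jK : j < Kp by apply: ltn_pmod.
have km : k <= m.
  have : k < m.+1 by rewrite ltn_divLR // -eS ltn_ord.
  by [].
set r := rho Kp j w.
have rK : r < Kp by apply: rho_lt.
case: ifP => hr /=; last by move=> h; rewrite (modn_small jK) -/r; lia.
move=> _.
have ck : tp + k * (tp + Lp) + (tp + Lp) <= Kp.
  by rewrite eKp -addnA -mulSnr leq_add2l leq_mul2r ltnS km orbT.
rewrite (@rho_char Kp _ w (r + Kp - (tp + k * (tp + Lp)))).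
- move: ck; generalize (k * (tp + Lp)) => X; lia.
- exact: ltn_pmod.
- move: ck; generalize (k * (tp + Lp)) => X; lia.
rewrite modnDmr -(rho_spec w jK) -/r.
apply: (@mod_of_eq _ _ 1); move: ck; generalize (k * (tp + Lp)) => X; lia.
Qed.

Lemma null_card Kp tp Lp m g (Kp0 : 0 < Kp) K S (tau : 'I_S) (w : 'I_K) :
  K = g * Kp -> Kp = tp + m.+1 * (tp + Lp) -> S = m.+1 * Kp -> tp <= Lp ->
  svD Kp tp Lp tau w ->
  #|[set x : 'I_K | svD Kp tp Lp tau x && ~~ cacheD tp x (aD tp Lp Kp0 tau w)]| <= Lp * g.
Proof.
move=> eK eKp eS tL svw.
set j := tau %% Kp; set k := tau %/ Kp.
have jK : j < Kp by apply: ltn_pmod.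
have km : k <= m.
  have : k < m.+1 by rewrite ltn_divLR // -eS ltn_ord.
  by [].
apply: (@count_users g Kp Lp K j (if rho Kp j w < tp then tp else 0)
          (tp + k * (tp + Lp))) => //.
  by case: ifP.
move=> x; rewrite inE /svD /cacheD /aD -/j -/k /= => /andP[].
case: ifP => hw /=.
  case/orP => [-> //|/andP[h1 h2] nc]; apply/orP; right.
  rewrite h2 andbT; case: leqP => // h3; exfalso; move: nc.
  have xK := rho_lt j x Kp0.
  rewrite (@rho_char Kp _ x (rho Kp j x - (tp + k * (tp + Lp)))).
  - by rewrite -leqNgt => ?; lia.
  - exact: ltn_pmod.
  - lia.
  rewrite modnDmr -(rho_spec x jK).
  apply: (@mod_of_eq _ _ 0); move: h1; generalize (k * (tp + Lp)) => X; lia.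
move=> hsv; rewrite (modn_small jK) => nc.
case/orP: hsv => h; first by rewrite h in nc.
by rewrite addn0.
Qed.


Lemma lt_mulK q j Kp M : j < Kp -> q <= M -> q * Kp + j < M.+1 * Kp.
Proof.
move=> hj hq; apply: (@leq_trans (q.+1 * Kp)).
  by rewrite mulSn; lia.
by rewrite leq_mul2r ltnS hq orbT.
Qed.

Lemma coverage Kp tp Lp m (Kp0 : 0 < Kp) K S (u : 'I_K) (j0 : 'I_Kp) :
  Kp = tp + m.+1 * (tp + Lp) -> S = m.+1 * Kp -> tp <= Lp -> 0 < Lp ->
  ~~ cacheD tp u j0 ->
  exists tau : 'I_S, svD Kp tp Lp tau u && (aD tp Lp Kp0 tau u == j0).
Proof.
move=> eKp eS tL L0; rewrite /cacheD -leqNgt => h0.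
have j0K := ltn_ord j0.
have rK := rho_lt j0 u Kp0.
have s0 : 0 < tp + Lp by lia.
have r0lt : rho Kp j0 u - tp < m.+1 * (tp + Lp) by lia.
have er0 := divn_eq (rho Kp j0 u - tp) (tp + Lp).
set k := (rho Kp j0 u - tp) %/ (tp + Lp) in er0.
set r := (rho Kp j0 u - tp) %% (tp + Lp) in er0.
have km : k <= m.
  have : k < m.+1 by rewrite ltn_divLR.
  by [].
have rs : r < tp + Lp by apply: ltn_pmod.
case: (ltnP r Lp) => hr.
  have tlt : k * Kp + j0 < S by rewrite eS; apply: lt_mulK.
  exists (Ordinal tlt).
  have hm : (k * Kp + j0) %% Kp = j0 by rewrite modnMDl modn_small.
  have hd : (k * Kp + j0) %/ Kp = k by rewrite divnMDl // divn_small // addn0.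
  rewrite /svD /aD /= hm hd.
  have -> : (rho Kp j0 u < tp) = false by apply/negbTE; rewrite -leqNgt.
  rewrite /=; apply/andP; split; first by apply/andP; split; move: er0 h0 hr;
    generalize (rho Kp j0 u) (k * (tp + Lp)) => R X; lia.
  by apply/eqP; apply: val_inj; rewrite /= modn_small.
pose j2 := (j0 + tp + k * (tp + Lp) + Lp) %% Kp.
have j2K : j2 < Kp by apply: ltn_pmod.
have tlt : (m - k) * Kp + j2 < S by rewrite eS; apply: lt_mulK => //; lia.
exists (Ordinal tlt).
have hm : ((m - k) * Kp + j2) %% Kp = j2 by rewrite modnMDl modn_small.
have hd : ((m - k) * Kp + j2) %/ Kp = m - k
  by rewrite divnMDl // divn_small // addn0.
rewrite /svD /aD /= hm hd.
have hrho : rho Kp j2 u = r - Lp.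
  apply: rho_char => //; first by lia.
  rewrite /j2 modnDmr -(rho_spec u j0K).
  apply: (@mod_of_eq _ _ 0); move: er0 h0 hr.
  generalize (rho Kp j0 u) (k * (tp + Lp)) => R X; lia.
rewrite hrho.
have -> : (r - Lp < tp) = true by apply/idP; lia.
rewrite /=; apply/eqP; apply: val_inj => /=.
rewrite /j2 modnDml -[RHS](modn_small j0K).
apply: (@mod_of_eq _ _ 1).
have e2 : (m - k) * (tp + Lp) + k * (tp + Lp) = m * (tp + Lp)
  by rewrite -mulnDl subnK.
move: e2 eKp; rewrite mulSn.
generalize (k * (tp + Lp)) ((m - k) * (tp + Lp)) (m * (tp + Lp)) (nat_of_ord j0) => X Y Z J; lia.
Qed.
Local Open Scope ring_scope.
Definition subH (K L : nat) (H : 'M[C]_(K, L)) (f : {ffun 'I_L -> 'I_K}) : 'M[C]_L :=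
  \matrix_(i, j) H (f i) j.

Definition detpoly (K L : nat) (f : {ffun 'I_L -> 'I_K}) : {mpoly C[K * L]} :=
  \det (\matrix_(i, j) 'X_(mxvec_index (f i) j)).

Definition Pgen (K L : nat) : {mpoly C[K * L]} :=
  \prod_(f : {ffun 'I_L -> 'I_K} | injectiveb f) detpoly f.

Lemma eval_detpoly K L (H : 'M[C]_(K, L)) f :
  (detpoly f).@[chan_coords H] = \det (subH H f).
Proof.
rewrite /detpoly -det_map_mx; congr (\det _); apply/matrixP => i j.
rewrite !mxE; by rewrite [LHS](mevalXU (chan_coords H)) /chan_coords mxvecE.
Qed.

Lemma detpoly_neq0 K L (f : {ffun 'I_L -> 'I_K}) : injective f -> detpoly f != 0.
Proof.
move=> injf; apply/negP => /eqP e0.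
pose H0 : 'M[C]_(K, L) := \matrix_(k, j) ((k == f j)%:R : C).
have := eval_detpoly H0 f; rewrite e0 meval0.
have -> : subH H0 f = 1%:M.
  by apply/matrixP => i j; rewrite !mxE (inj_eq injf).
by rewrite det1 => /eqP; rewrite eq_sym oner_eq0.
Qed.

Lemma Pgen_neq0 K L : Pgen K L != 0.
Proof.
rewrite /Pgen prodf_seq_neq0; apply/allP => f _; apply/implyP => /injectiveP.
exact: detpoly_neq0.
Qed.

Lemma Pgen_eval K L (H : 'M[C]_(K, L)) : (Pgen K L).@[chan_coords H] != 0 ->
  forall f : {ffun 'I_L -> 'I_K}, injective f -> \det (subH H f) != 0.
Proof.
rewrite /Pgen rmorph_prod prodf_seq_neq0 => /allP Hall f injf.
have := Hall f (mem_index_enum _); rewrite (introT (injectiveP _) injf) /=.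
by rewrite eval_detpoly.
Qed.

Lemma extend_inj K L (S : {set 'I_K}) : (0 < K)%N -> (#|S| <= L)%N -> (L <= K)%N ->
  exists f : {ffun 'I_L -> 'I_K}, injective f /\ forall x, x \in S -> exists i, f i = x.
Proof.
move=> K0 SL LK.
have : (L - #|S| <= #|~: S|)%N by have := cardsC S; rewrite card_ord; lia.
case/card_geqP => s [us ss sub].
pose sq := enum S ++ s.
have szq : size sq = L by rewrite size_cat -cardE ss; lia.
have uq : uniq sq.
  rewrite cat_uniq enum_uniq us andbT /=; apply/hasPn => x /sub.
  by rewrite in_setC mem_enum.
pose w0 : 'I_K := Ordinal K0.
exists [ffun i : 'I_L => nth w0 sq i]; split.
  move=> i j; rewrite !ffunE => /eqP; rewrite nth_uniq ?szq // => /eqP.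
  exact: val_inj.
move=> x xS.
have xq : x \in sq by rewrite mem_cat mem_enum xS.
have ix : (index x sq < L)%N by rewrite -szq index_mem.
by exists (Ordinal ix); rewrite ffunE /= nth_index.
Qed.

Lemma beam K L (H : 'M[C]_(K, L)) (S : {set 'I_K}) w :
  (0 < K)%N -> (L <= K)%N -> (forall f : {ffun 'I_L -> 'I_K}, injective f -> \det (subH H f) != 0) ->
  w \in S -> (#|S| <= L)%N ->
  exists v : 'cV[C]_L, (row w H *m v) 0 0 = 1 /\
     forall x, x \in S -> x != w -> (row x H *m v) 0 0 = 0.
Proof.
move=> K0 LK Hdet wS SL.
have [f [injf fS]] := extend_inj K0 SL LK.
have [i0 fi0] := fS w wS.
have unitHf : subH H f \in unitmx by rewrite unitmxE unitfE Hdet.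
exists (invmx (subH H f) *m delta_mx i0 0).
have key (i : 'I_L) : (row (f i) H *m (invmx (subH H f) *m delta_mx i0 0)) 0 0
                     = ((i == i0)%:R : C).
  have -> : row (f i) H = row i (subH H f).
    by apply/matrixP => a b; rewrite !mxE.
  by rewrite -row_mul mulmxA mulmxV // mul1mx !mxE eqxx andbT.
split; first by rewrite -fi0 key eqxx.
move=> x xS xw; have [i fi] := fS x xS.
rewrite -fi key; case: eqP => // ii0.
by move: xw; rewrite -fi ii0 fi0 eqxx.
Qed.
Lemma scheme_of_design K L N (M : rat) F S (cache : 'I_K -> 'I_F -> bool)
  (sv : 'I_S -> 'I_K -> bool) (a : 'I_S -> 'I_K -> 'I_F) :
  (0 < K)%N -> (L <= K)%N ->
  (forall u, (#|[set p : 'I_N * 'I_F | cache u p.2]|)%:R <= M * F%:R) ->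
  (forall tau w, sv tau w -> ~~ cache w (a tau w)) ->
  (forall tau w, sv tau w -> (#|[set x | sv tau x && ~~ cache x (a tau w)]| <= L)%N) ->
  (forall u j, ~~ cache u j -> exists tau, sv tau u && (a tau u == j)) ->
  scheme_exists K L N M F S.
Proof.
move=> K0 LK hZ hB hA hC.
exists (fun u => [set p : 'I_N * 'I_F | cache u p.2]); split => //.
exists (Pgen K L); split; first exact: Pgen_neq0.
move=> H /Pgen_eval Hdet d.
pose Nl tau w := [set x | sv tau x && ~~ cache x (a tau w)].
have : forall q : 'I_S * 'I_K, exists v : 'cV[C]_L, sv q.1 q.2 ->
   (row q.2 H *m v) 0 0 = 1 /\
     forall x, x \in Nl q.1 q.2 -> x != q.2 -> (row x H *m v) 0 0 = 0.
  move=> [tau w] /=; case svw: (sv tau w); last by exists 0.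
  have wN : w \in Nl tau w by rewrite inE svw hB.
  have [v [v1 v2]] := beam K0 LK Hdet wN (hA _ _ svw).
  by exists v.
case/fin_all_exists => v hv.
pose V (tau : 'I_S) (p : 'I_N * 'I_F) : 'cV[C]_L :=
  \sum_(w | sv tau w && ((d w, a tau w) == p)) v (tau, w).
exists V => k.
pose e tau w := (row k H *m v (tau, w)) 0 0.
have rec : forall W tau, received H V W k tau =
    \sum_(w | sv tau w) W (d w, a tau w) * e tau w.
  move=> W tau; rewrite /received /transmit.
  have -> : \sum_(p : 'I_N * 'I_F) W p *: V tau p =
            \sum_(w | sv tau w) W (d w, a tau w) *: v (tau, w).
    rewrite /V.
    under eq_bigr => p _ do rewrite scaler_sumr.
    rewrite (exchange_big_dep (fun w => sv tau w)) /=; last by move=> p w _ /andP[].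
    apply: eq_bigr => w svw.
    rewrite (big_pred1 (d w, a tau w)) // => p /=.
    by rewrite svw eq_sym.
  rewrite mulmx_sumr summxE; apply: eq_bigr => w _.
  by rewrite -scalemxAr mxE.
move=> W W' hW hR j.
case cj: (cache k j).
  by apply: hW; rewrite inE.
have [tau /andP[svk /eqP akj]] := hC k j (negbT cj).
have := hR tau; rewrite !rec (bigD1 k svk) (bigD1 k svk) /=.
have [ek _] := hv (tau, k) svk.
rewrite /e ek !mulr1 akj.
set R1 := \sum_(i | _) _; set R2 := \sum_(i | _) _.
suff -> : R1 = R2 by move/addIr.
apply: eq_big => // w /andP[svw wk].
case cw: (cache k (a tau w)).
  by rewrite hW // inE.
have [_ ez] := hv (tau, w) svw.
rewrite /e ez ?mulr0 //=; [by rewrite inE svk cw | by rewrite eq_sym].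
Qed.

Theorem theorem3 (K L N : nat) (t n : nat) (M : rat) :
  (0 < K)%N -> (0 < L)%N -> (0 < N)%N -> (2 <= n)%N ->
  K = (n * t + (n - 1) * L)%N -> (t <= L)%N ->
  M / N%:R = t%:R / K%:R ->
  (K%:R - t%:R) / (t + L)%:R = (n - 1)%N%:R :> rat /\
  achievable K L N M (K %/ gcdn (gcdn K t) L)%N ((K%:R - t%:R) / (t + L)%:R).
Proof.
move=> K0 L0 N0 n2 eK tL eM.
have [m em] : exists m, n = m.+2 by exists (n - 2)%N; lia.
subst n.
have n1 : (m.+2 - 1 = m.+1)%N by lia.
rewrite n1 in eK *.
have eKt : (K - t = m.+1 * (t + L))%N.
  by rewrite eK mulSn mulnDr; lia.
have eT : (K%:R - t%:R) / (t + L)%:R = m.+1%:R :> rat.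
  have tL0 : (t + L)%:R != 0 :> rat by rewrite pnatr_eq0; lia.
  rewrite -natrB; last by rewrite eK mulSn; lia.
  by rewrite eKt natrM mulfK.
split => //; rewrite eT.
set g := gcdn (gcdn K t) L.
have g0 : (0 < g)%N by rewrite gcdn_gt0 L0 orbT.
have gK : (g %| K)%N := dvdn_trans (dvdn_gcdl _ _) (dvdn_gcdl _ _).
have gt : (g %| t)%N := dvdn_trans (dvdn_gcdl _ _) (dvdn_gcdr _ _).
have gL : (g %| L)%N := dvdn_gcdr _ _.
set Kp := (K %/ g)%N; set tp := (t %/ g)%N; set Lp := (L %/ g)%N.
have eK' : K = (Kp * g)%N by rewrite divnK.
have et' : t = (tp * g)%N by rewrite divnK.
have eL' : L = (Lp * g)%N by rewrite divnK.
have eKp : Kp = (tp + m.+1 * (tp + Lp))%N.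
  apply/eqP; rewrite -(eqn_pmul2r g0) -eK'; apply/eqP.
  rewrite eK et' eL'; ring.
have Kp0 : (0 < Kp)%N by rewrite eK' muln_gt0 in K0; case/andP: K0.
have Lp0 : (0 < Lp)%N by rewrite eL' muln_gt0 in L0; case/andP: L0.
have tLp : (tp <= Lp)%N by rewrite -(leq_pmul2r g0) -et' -eL'.
have LK : (L <= K)%N by rewrite eK mulSn; lia.
exists (m.+1 * Kp)%N; split.
  have Kpn0 : Kp%:R != 0 :> rat by rewrite pnatr_eq0 -lt0n.
  by rewrite natrM mulfK.
apply: (@scheme_of_design K L N M Kp (m.+1 * Kp)%N (@cacheD Kp tp K)
          (@svD Kp tp Lp K (m.+1 * Kp)%N) (@aD Kp tp Lp Kp0 K (m.+1 * Kp)%N)) => //.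
- move=> u; apply: (@le_trans _ _ (N * tp)%N%:R).
    by rewrite ler_nat cache_card.
  have N0' : N%:R != 0 :> rat by rewrite pnatr_eq0 -lt0n.
  have K0' : K%:R != 0 :> rat by rewrite pnatr_eq0 -lt0n.
  have g0' : g%:R != 0 :> rat by rewrite pnatr_eq0 -lt0n.
  have Kp0' : Kp%:R != 0 :> rat by rewrite pnatr_eq0 -lt0n.
  have eM' : M = N%:R * t%:R / K%:R.
    by rewrite -[M](divfK N0') eM; field.
  rewrite eM' et' eK' !natrM.
  rewrite le_eqVlt; apply/orP; left; apply/eqP; field; apply/andP; split => //.
- move=> tau w svw; exact: (not_cached_served Kp0 eKp erefl tLp svw).
- move=> tau w svw; rewrite eL'; exact: (null_card Kp0 (etrans eK' (mulnC _ _)) eKp erefl tLp svw).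
- move=> u j nc; exact: (coverage Kp0 eKp erefl tLp Lp0 nc).
Qed.
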